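(* Let $\mathcal{P}$, $\mathcal{Q}$ and $\mathcal{R}$ be orthogonal decompositions of the spaces $V_\Omega$, $V_{\Upsilon}$ and $V_{\Gamma}$, respectively, with $V_{\Upsilon} \leq V_\Omega$ and $V_{\Gamma} \leq V_\Omega$. If $\mathcal{Q}$ is structure balanced in relation to $\mathcal{P}$ with efficiency factors $\lambda_{\mathbf{PQ}}$, and $\mathcal{R}$ is structure balanced in relation to $\mathcal{P} \vartriangleright\mathcal{Q}$ with efficiency factors $\lambda_{\mathbf{P} \vartriangleright\mathbf{Q}, \mathbf{R}}$ and $\lambda_{\mathbf{P} \vdash\mathcal{Q}, \mathbf{R}}$, then: (a) $\mathcal{R}$ is structure balanced in relation to $\mathcal{P}$ with efficiency matrix $\Lambda_{\mathcal{PR}}$ whose entries are $\lambda_{\mathbf{P} \mathbf{R}} = \big( \lambda_{\mathbf{P} \vdash \mathcal{Q}, \mathbf{R}} + \sum_{\mathbf{Q} \in\mathcal{Q}}' \lambda_{\mathbf{P} \vartriangleright\mathbf{Q}, \mathbf{R}} \big)$; (b) the decomposition $(\mathcal{P} \vartriangleright\mathcal{Q}) \vartriangleright \mathcal{R}$ is \begin{eqnarray*} & & \{(\mathbf{P} \vartriangleright\mathbf{Q}) \vartriangleright\mathbf{R}\colon\mathbf{P} \in\mathcal{P}, \mathbf{Q} \in\mathcal{Q}, \mathbf{R} \in\mathcal{R}, \lambda_{\mathbf{PQ}} \neq0, \lambda_{\mathbf{P} \vartriangleright \mathbf{Q}, \mathbf{R}} \neq0 \} \\ &&\qquad{}\cup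 \{(\mathbf{P} \vartriangleright\mathbf{Q}) \vdash\mathcal{R}\colon\mathbf{P} \in\mathcal{P}, \mathbf{Q} \in\mathcal{Q}, \lambda_{\mathbf{PQ}} \neq0 \} \\ &&\qquad{}\cup \{(\mathbf{P} \vdash\mathcal{Q}) \vartriangleright\mathbf{R}\colon\mathbf{P} \in\mathcal{P}, \mathbf{R} \in\mathcal{R}, \lambda_{\mathbf{P} \vdash\mathcal{Q}, \mathbf{R}} \neq0 \} \\ &&\qquad{}\cup \{(\mathbf{P} \vdash\mathcal{Q}) \vdash\mathcal{R}\colon\mathbf{P} \in\mathcal{P} \}. \end{eqnarray*}
   Context: $\Omega$ is a finite set of observational units and $V_\Omega$ the space of real vectors indexed by $\Omega$; $\Upsilon$ and $\Gamma$ are further finite sets whose vector spaces are identified (via allocation functions $\Omega\to\Upsilon$, $\Omega\to\Gamma$) with subspaces $V_\Upsilon, V_\Gamma$ of $V_\Omega$. An orthogonal decomposition (structure) of a space is identified with the complete set of mutually orthogonal idempotent (projection) matrices onto its subspaces; all these are regarded as $\Omega\times\Omega$ matrices. For idempotents $\mathbf{P}$ and $\mathbf{Q}$, $\mathbf{Q}$ has first-order balance in relation to $\mathbf{P}$ if $\mathbf{QPQ}=\lambda_{\mathbf{PQ}}\mathbf{Q}$ for a scalar $\lambda_{\mathbf{PQ}}$ (the efficiency factor); if $\lambda_{\mathbf{PQ}}\neq 0$, $\mathbf{P}\vartriangleright\mathbf{Q}=\lambda_{\mathbf{PQ}}^{-1}\mathbf{PQP}$, the projector onto $\operatorname{Im}\mathbf{PQ}$.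 A structure $\mathcal{Q}$ is structure balanced in relation to a structure $\mathcal{P}$ if every element of $\mathcal{Q}$ has first-order balance in relation to every element of $\mathcal{P}$ and $\mathbf{Q}_1\mathbf{P}\mathbf{Q}_2=\mathbf{0}$ for all $\mathbf{P}\in\mathcal{P}$ and distinct $\mathbf{Q}_1,\mathbf{Q}_2\in\mathcal{Q}$. Then $\mathbf{P}\vdash\mathcal{Q}=\mathbf{P}-\sum'_{\mathbf{Q}\in\mathcal{Q}}\mathbf{P}\vartriangleright\mathbf{Q}$, where $\sum'_{\mathbf{Q}\in\mathcal{Q}}$ denotes summation over those $\mathbf{Q}$ with $\lambda_{\mathbf{PQ}}\neq0$; and the decomposition $\mathcal{P}\vartriangleright\mathcal{Q}$ of $V_\Omega$ consists of the (nonzero) idempotents $\mathbf{P}\vartriangleright\mathbf{Q}$ ($\lambda_{\mathbf{PQ}}\neq0$) and $\mathbf{P}\vdash\mathcal{Q}$ for $\mathbf{P}\in\mathcal{P}$, $\mathbf{Q}\in\mathcal{Q}$. The operations $\vartriangleright$ and $\vdash$ are applied in the same way to elements of $\mathcal{P}\vartriangleright\mathcal{Q}$ and $\mathcal{R}$; $\lambda_{\mathbf{P} \vartriangleright\mathbf{Q}, \mathbf{R}}$ and $\lambda_{\mathbf{P} \vdash\mathcal{Q}, \mathbf{R}}$ are the efficiency factors of $\mathbf{R}$ in relation to $\mathbf{P}\vartriangleright\mathbf{Q}$ and $\mathbf{P}\vdash\mathcal{Q}$. This is the setting of unrandomized-inclusive randomizations: $\Upsilon$ is randomized to $\Omega$,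 then $\Gamma$ is randomized to $\Omega$ taking account of the first randomization. *)

(* Defs.v *)
From HB Require Import structures.
From mathcomp Require Import all_boot all_order all_algebra.
Set Implicit Arguments. Unset Strict Implicit. Unset Printing Implicit Defensive.
Import Order.TTheory GRing.Theory Num.Theory.
Local Open Scope ring_scope.

Section Defs.
Variables (R : realFieldType) (n : nat).
Notation M := 'M[R]_n.

(* Matrix whose row space is V_Y, the subspace of V_Omega (Omega = 'I_n)
   of vectors constant on the fibres of the allocation function f. *)
Definition Vof (U : finType) (f : 'I_n -> U) : 'M[R]_(#|U|, n) :=
  \matrix_(u < #|U|, i < n) ((f i == enum_val u)%:R).

Definition is_decomp (Ps : seq M) (m : nat) (V : 'M[R]_(m, n)) : Prop :=
  [/\ uniq Ps,
      (forall P, P \in Ps -> [/\ P *m P = P, P^T = P & P != 0]),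
      (forall P1 P2, P1 \in Ps -> P2 \in Ps -> P1 != P2 -> P1 *m P2 = 0)
    & (\sum_(P <- Ps) P == V)%MS].

Definition fo_balance (P Q : M) : Prop := exists l : R, Q *m P *m Q = l *: Q.

(* Efficiency factor of Q in relation to P: the scalar l with QPQ = lQ
   (unique when Q is a nonzero projector and balance holds). *)
Definition eff (P Q : M) : R := \tr (Q *m P *m Q) / \tr Q.

Definition struct_bal (Qs Ps : seq M) : Prop :=
  (forall P Q, P \in Ps -> Q \in Qs -> fo_balance P Q) /\
  (forall P Q1 Q2, P \in Ps -> Q1 \in Qs -> Q2 \in Qs -> Q1 != Q2 ->
     Q1 *m P *m Q2 = 0).

Definition rhd (P Q : M) : M := (eff P Q)^-1 *: (P *m Q *m P).

Definition vdash (P : M) (Qs : seq M) : M :=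
  P - \sum_(Q <- Qs | eff P Q != 0) rhd P Q.

Definition decomp_rhd (Ps Qs : seq M) : seq M :=
  [seq X <- flatten [seq [seq rhd P Q | Q <- Qs & eff P Q != 0] | P <- Ps]
            ++ [seq vdash P Qs | P <- Ps] | X != 0].

End Defs.

(* Main.v *)
Require Import Defs.
From HB Require Import structures.
From mathcomp Require Import all_boot all_order all_algebra.
Import Order.TTheory GRing.Theory Num.Theory.
Local Open Scope ring_scope.

Section H.
Variables (R : realFieldType) (n : nat).
Notation M := 'M[R]_n.

Lemma tr_neq0 (A : M) : A *m A = A -> A^T = A -> A != 0 -> \tr A != 0.
Proof.
move=> AA AT nz; apply: contra nz => /eqP t0.
have e : \tr A = \sum_i \sum_j (A i j) ^+ 2.
  rewrite -{1}AA -{2}AT /mxtrace; apply: eq_bigr => i _.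
  by rewrite mxE; apply: eq_bigr => j _; rewrite mxE expr2.
rewrite e in t0.
apply/eqP/matrixP => i j; rewrite mxE.
have h := psumr_eq0P (P := predT) (fun i _ => sumr_ge0 _ (fun j _ => sqr_ge0 (A i j))) t0 (i := i) isT.
have := psumr_eq0P (P := predT) (fun j _ => sqr_ge0 (A i j)) h (i := j) isT.
by move/eqP; rewrite sqrf_eq0 => /eqP.
Qed.

Lemma eff_eq (P Q : M) l : Q *m Q = Q -> Q^T = Q -> Q != 0 ->
  Q *m P *m Q = l *: Q -> eff P Q = l.
Proof.
move=> QQ QT nz e; rewrite /eff e mxtraceZ mulfK //; exact: tr_neq0.
Qed.

Lemma eff0 (Q : M) : eff 0 Q = 0.
Proof. by rewrite /eff mulmx0 mul0mx mxtrace0 mul0r. Qed.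

Lemma rhd0 (Q : M) : rhd 0 Q = 0.
Proof. by rewrite /rhd mul0mx mul0mx scaler0. Qed.

Lemma vdash0 (Rs : seq M) : vdash 0 Rs = 0.
Proof. by rewrite /vdash big1 ?subr0 // => Q _; rewrite rhd0. Qed.

Lemma P_split (P : M) Qs :
  P = vdash P Qs + \sum_(Q <- Qs | eff P Q != 0) rhd P Q.
Proof. by rewrite /vdash subrK. Qed.

Lemma memF (f : M -> M -> M) (p : M -> M -> bool) (Ps Qs : seq M) Y :
  reflect (exists P Q, [/\ P \in Ps, Q \in Qs, p P Q & Y = f P Q])
    (Y \in flatten [seq [seq f P Q | Q <- Qs & p P Q] | P <- Ps]).
Proof.
apply: (iffP flatten_mapP).
  move=> [P PP /mapP [Q]]; rewrite mem_filter => /andP [pq QQ] ->.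
  by exists P, Q.
move=> [P [Q [PP QQ pq ->]]]; exists P => //; apply/mapP; exists Q => //.
by rewrite mem_filter pq.
Qed.

Lemma memF3 (f : M -> M -> M -> M) (p : M -> M -> bool) (q : M -> M -> M -> bool)
    (Ps Qs Rs : seq M) Y :
  reflect (exists P Q Rm, [/\ P \in Ps, Q \in Qs, Rm \in Rs, p P Q && q P Q Rm & Y = f P Q Rm])
    (Y \in flatten [seq flatten [seq [seq f P Q Rm | Rm <- Rs & q P Q Rm]
         | Q <- Qs & p P Q] | P <- Ps]).
Proof.
apply: (iffP flatten_mapP).
  move=> [P PP /flatten_mapP [Q]]; rewrite mem_filter => /andP [pq QQ].
  move=> /mapP [Rm]; rewrite mem_filter => /andP [qq RR] ->.
  by exists P, Q, Rm; rewrite pq qq.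
move=> [P [Q [Rm [PP QQ RR /andP [pq qq] ->]]]]; exists P => //; apply/flatten_mapP.
exists Q; first by rewrite mem_filter pq.
by apply/mapP; exists Rm => //; rewrite mem_filter qq.
Qed.

Lemma memM (f : M -> M) (Ps : seq M) Y :
  reflect (exists2 P, P \in Ps & Y = f P) (Y \in [seq f P | P <- Ps]).
Proof. exact: mapP. Qed.

End H.

Theorem theorem1 (R : realFieldType) (n : nat) (U G : finType)
    (fU : 'I_n -> U) (fG : 'I_n -> G) (Ps Qs Rs : seq 'M[R]_n) :
  is_decomp Ps (1%:M : 'M[R]_n) ->
  is_decomp Qs (Vof R fU) ->
  is_decomp Rs (Vof R fG) ->
  struct_bal Qs Ps ->
  struct_bal Rs (decomp_rhd Ps Qs) ->
  (* (a) *)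
  (struct_bal Rs Ps /\
   forall P Rm, P \in Ps -> Rm \in Rs ->
     Rm *m P *m Rm =
       (eff (vdash P Qs) Rm
        + \sum_(Q <- Qs | eff P Q != 0) eff (rhd P Q) Rm) *: Rm) /\
  (* (b) *)
  decomp_rhd (decomp_rhd Ps Qs) Rs =i
    [seq X <-
       flatten [seq flatten [seq [seq rhd (rhd P Q) Rm
                                    | Rm <- Rs & eff (rhd P Q) Rm != 0]
                               | Q <- Qs & eff P Q != 0] | P <- Ps]
    ++ flatten [seq [seq vdash (rhd P Q) Rs | Q <- Qs & eff P Q != 0]
                  | P <- Ps]
    ++ flatten [seq [seq rhd (vdash P Qs) Rm
                       | Rm <- Rs & eff (vdash P Qs) Rm != 0] | P <- Ps]
    ++ [seq vdash (vdash P Qs) Rs | P <- Ps]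
     | X != 0].
Proof.
move=> _ _ [_ HR _ _] _ [Hfo Hort].
have Rprops : forall Rm, Rm \in Rs -> [/\ Rm *m Rm = Rm, Rm^T = Rm & Rm != 0] by [].
have term : forall X, X = 0 \/ X \in decomp_rhd Ps Qs ->
   (forall Rm, Rm \in Rs -> Rm *m X *m Rm = eff X Rm *: Rm) /\
   (forall R1 R2, R1 \in Rs -> R2 \in Rs -> R1 != R2 -> R1 *m X *m R2 = 0).
  move=> X [->|XD].
    by split=> [Rm _|*]; rewrite ?eff0 ?scale0r mulmx0 mul0mx.
  split=> [Rm RR|R1 R2 R1R R2R ne]; last exact: Hort.
  have [HH HT Hnz] := HR Rm RR.
  have [l e] := Hfo X Rm XD RR.
  by rewrite e (@eff_eq _ _ X Rm l HH HT Hnz e).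
have inD : forall X, (X \in decomp_rhd Ps Qs) = (X != 0) &&
   ((X \in flatten [seq [seq rhd P Q | Q <- Qs & eff P Q != 0] | P <- Ps]) ||
    (X \in [seq vdash P Qs | P <- Ps])).
  by move=> X; rewrite /decomp_rhd mem_filter mem_cat.
have tv : forall P, P \in Ps -> vdash P Qs = 0 \/ vdash P Qs \in decomp_rhd Ps Qs.
  move=> P PP; have [->|nz] := eqVneq (vdash P Qs) 0; first by left.
  right; rewrite inD nz /=; apply/orP; right; apply/mapP; by exists P.
have tr : forall P Q, P \in Ps -> Q \in Qs -> eff P Q != 0 ->
   rhd P Q = 0 \/ rhd P Q \in decomp_rhd Ps Qs.
  move=> P Q PP QQ ne; have [->|nz] := eqVneq (rhd P Q) 0; first by left.
  right; rewrite inD nz /=; apply/orP; left; apply/memF; by exists P, Q.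
have splitR : forall P (A B : 'M[R]_n),
   A *m P *m B = A *m vdash P Qs *m B + \sum_(Q <- Qs | eff P Q != 0) A *m rhd P Q *m B.
  move=> P A B; rewrite {1}(@P_split _ _ P Qs) mulmxDr mulmxDl mulmx_sumr mulmx_suml.
  by congr (_ + _); apply: eq_bigr => Q _; rewrite mulmxA.
have partA : forall P Rm, P \in Ps -> Rm \in Rs ->
     Rm *m P *m Rm =
       (eff (vdash P Qs) Rm
        + \sum_(Q <- Qs | eff P Q != 0) eff (rhd P Q) Rm) *: Rm.
  move=> P Rm PP RR; rewrite splitR scalerDl scaler_suml.
  rewrite ((term _ (tv P PP)).1 Rm RR); congr (_ + _).
  rewrite [LHS]big_seq_cond [RHS]big_seq_cond; apply: eq_bigr => Q /andP [QQ ne].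
  by rewrite ((term _ (tr P Q PP QQ ne)).1 Rm RR).
split.
  split=> //; split.
    by move=> P Rm PP RR; eexists; exact: partA.
  move=> P R1 R2 PP R1R R2R ne; rewrite splitR.
  rewrite ((term _ (tv P PP)).2 R1 R2 R1R R2R ne) add0r big_seq_cond big1 //.
  by move=> Q /andP [QQ e]; rewrite ((term _ (tr P Q PP QQ e)).2 R1 R2 R1R R2R ne).
move=> Y; rewrite /decomp_rhd mem_filter [in RHS]mem_filter.
case: (eqVneq Y 0) => [//|Ynz /=].
rewrite !mem_cat; apply/idP/idP.
  case/orP.
    move/memF => [X [Rm [XD RR ne ->]]].
    move: XD ne; rewrite inD => /andP [_ /orP [/memF [P [Q [PP QQ e ->]]] | /mapP [P PP ->]]] ne.
      by apply/orP; left; apply/memF3; exists P, Q, Rm; rewrite e ne.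
    by apply/orP; right; apply/orP; right; apply/orP; left; apply/memF; exists P, Rm.
  move/mapP => [X XD ->].
  move: XD; rewrite inD => /andP [_ /orP [/memF [P [Q [PP QQ e ->]]] | /mapP [P PP ->]]].
    apply/orP; right; apply/orP; left; apply/flatten_mapP; exists P => //.
    by apply/mapP; exists Q => //; rewrite mem_filter e.
  by apply/orP; right; apply/orP; right; apply/orP; right; apply/mapP; exists P.
case/orP.
  move/memF3 => [P [Q [Rm [PP QQ RR /andP [e ne] Ye]]]].
  apply/orP; left; apply/memF; exists (rhd P Q), Rm; split=> //.
  rewrite inD; apply/andP; split.
    by apply: contra Ynz => /eqP z; rewrite Ye z rhd0.
  by apply/orP; left; apply/memF; exists P, Q.
case/orP.
  move/flatten_mapP => [P PP /mapP [Q]]; rewrite mem_filter => /andP [e QQ] Ye.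
  apply/orP; right; apply/mapP; exists (rhd P Q) => //.
  rewrite inD; apply/andP; split.
    by apply: contra Ynz => /eqP z; rewrite Ye z vdash0.
  by apply/orP; left; apply/memF; exists P, Q.
case/orP.
  move/memF => [P [Rm [PP RR ne Ye]]].
  apply/orP; left; apply/memF; exists (vdash P Qs), Rm; split=> //.
  rewrite inD; apply/andP; split.
    by apply: contra Ynz => /eqP z; rewrite Ye z rhd0.
  by apply/orP; right; apply/mapP; exists P.
move/mapP => [P PP Ye].
apply/orP; right; apply/mapP; exists (vdash P Qs) => //.
rewrite inD; apply/andP; split.
  by apply: contra Ynz => /eqP z; rewrite Ye z vdash0.
by apply/orP; right; apply/mapP; exists P.
Qed.
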